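(* Let $\beta>0$ and $\beta'>0$. For integers $k,l\geqslant 0$ define $$T_{l,k}=\int_{\mathbb{R}}H_{l}^{\beta'}(v)\,\mathcal{H}_{k}^{\beta}(v)\,\mathrm{d}v,$$ and set $T_{l,k}=0$ whenever $l<0$ or $k<0$. Then: (i) $T_{l,k}=0$ whenever $l<k$ or $l+k$ is odd; (ii) for all $k,l\geqslant 0$, $T_{l,k}=\frac{\beta}{\beta'}\sqrt{\frac{k+1}{l+1}}\,T_{l+1,k+1}$ and $T_{l,l}=\left(\frac{\beta'}{\beta}\right)^{l+\frac12}$; (iii) for all $l\geqslant 1$, $k\geqslant 0$, $$T_{l,k}=\frac{\beta'}{\beta}\sqrt{\frac{k+1}{l}}\,T_{l-1,k+1}+\frac{\beta'}{\beta}\sqrt{\frac{k}{l}}\,T_{l-1,k-1}-\sqrt{\frac{l-1}{l}}\,T_{l-2,k};$$ (iv) for all $l\geqslant 1$, $k\geqslant 0$ with $l\neq k$, $$T_{l,k}=\frac{\sqrt{l(k+1)}}{l-k}\left(\frac{\beta'}{\beta}-\frac{\beta}{\beta'}\right)T_{l-1,k+1}.$$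
   Context: $H_k$ denotes the (physicists') Hermite polynomial of degree $k\geqslant 0$, given by Rodrigues' formula $H_k(v)=(-1)^k e^{v^2}\frac{\mathrm{d}^k}{\mathrm{d}v^k}\big[e^{-v^2}\big]$. For a scaling factor $\beta>0$ and $k\geqslant 0$, the scaled Hermite polynomial and the scaled asymmetrically-weighted Hermite function are $$H_k^{\beta}(v)=\frac{\sqrt{\beta}}{(2\pi)^{1/4}\sqrt{2^k k!}}\,H_k\!\left(\frac{\beta v}{\sqrt2}\right),\qquad \mathcal{H}_k^{\beta}(v)=\frac{\sqrt{\beta}}{(2\pi)^{1/4}\sqrt{2^k k!}}\,H_k\!\left(\frac{\beta v}{\sqrt2}\right)e^{-\frac{\beta^2v^2}{2}},\qquad v\in\mathbb{R}.$$ *)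

(* Defs.v *)
From Stdlib Require Import Reals ZArith.
From Coquelicot Require Import Coquelicot.
Open Scope R_scope.

Definition hermite (k : nat) (v : R) : R :=
  (-1) ^ k * exp (v ^ 2) * Derive_n (fun x => exp (- x ^ 2)) k v.

Definition hnorm (beta : R) (k : nat) : R :=
  sqrt beta / (Rpower (2 * PI) (1 / 4) * sqrt (2 ^ k * INR (fact k))).

Definition scaled_hermite (beta : R) (k : nat) (v : R) : R :=
  hnorm beta k * hermite k (beta * v / sqrt 2).

Definition scaled_hermite_fun (beta : R) (k : nat) (v : R) : R :=
  hnorm beta k * hermite k (beta * v / sqrt 2) * exp (- (beta ^ 2 * v ^ 2) / 2).

Definition Tnat (beta beta' : R) (l k : nat) : R :=
  RInt_gen (fun v => scaled_hermite beta' l v * scaled_hermite_fun beta k v)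
    (Rbar_locally m_infty) (Rbar_locally p_infty).

Definition T (beta beta' : R) (l k : Z) : R :=
  if orb (Z.ltb l 0) (Z.ltb k 0) then 0
  else Tnat beta beta' (Z.to_nat l) (Z.to_nat k).

(* Main.v *)
Require Import Defs.
From Stdlib Require Import Reals ZArith Lra Lia.
From Coquelicot Require Import Coquelicot.

Module Bridge.
From HB Require Import structures.
From mathcomp Require Import all_boot all_order all_algebra.
From mathcomp Require Import all_classical all_reals all_analysis.
From mathcomp Require Import Rstruct Rstruct_topology.
Local Set Implicit Arguments. Local Unset Strict Implicit.
Import Order.TTheory GRing.Theory Num.Theory.
Import numFieldNormedType.Exports.
Local Open Scope classical_set_scope.
Local Open Scope ring_scope.


Lemma RcosE (x : R) : Rtrigo_def.cos x = cos x.
Proof.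
apply/esym; rewrite /Rtrigo_def.cos; case: exist_cos => y.
rewrite /cos_in /infinite_sum => H.
have h := @cvg_cos_coeff' R x.
rewrite -(cvg_lim _ h) //; apply: (@cvg_lim R^o) => //.
rewrite -cvg_shiftS /=; apply/cvgrPdist_lt => /= e /RltP /H[N NH].
near=> n.
have nN : (n >= N)%coq_nat by apply/ssrnat.leP; near: n; exact: nbhs_infty_ge.
move: NH => /(_ _ nN) /[!RdistE] /RltP /=.
rewrite distrC sum_f_R0E; congr (`| _ - _ | < e).
apply: eq_bigr=> k _; rewrite /cos_n /cos_coeff' factE INRE.
have E1 : pow (Rsqr x) k = x ^+ k.*2.
  by rewrite RpowE -mul2n exprM; congr (_ ^+ _); rewrite expr2.
have E2 : pow (-1) k = (-1) ^ k.
  by rewrite RpowE -exprnP.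
rewrite E1 E2 -[(2 * k)%coq_nat]/(2 * k)%N mul2n.
by rewrite RdivE mulrAC.
Unshelve. all: by end_near. Qed.

Lemma R2E : IZR 2 = 2%:R :> R.
Proof. by rewrite IZRposE INRE. Qed.

Lemma PIE : PI = pi :> R.
Proof.
have [h1 h2] := @pihalf_02_cos_pihalf R.
have h : PI / 2 = pi / 2 :> R.
  apply: cos_02_uniq h2 => //.
  - have h3 : (0 <= PI / 2 <= 2)%coqR.
      have := PI2_RGT_0; have := PI_4; lra.
    case: h3 => h3 h4.
    apply/andP; split; apply/RleP; rewrite -R2E -RdivE //.
  - by have := cos_PI2; rewrite RcosE RdivE R2E.
have : (PI / 2 * 2 = pi / 2 * 2 :> R) by rewrite h.
by rewrite !divfK.
Qed.

Lemma derivable_pt_lim_mc (f : R^o -> R^o) x l :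
  derivable_pt_lim f x l -> derivable f x 1 /\ derive1 f x = l.
Proof.
move=> H.
have hc : (fun h : R^o => h^-1 *: ((f \o shift x) (h *: (1:R^o)) - f x)) @ 0^' --> l.
  apply/cvgrPdist_lt => e /RltP e0.
  have [d Hd] := H e e0.
  exists (pos d); first by apply/RltP; exact: (cond_pos d).
  move=> t /=; rewrite sub0r normrN => /RltP td /eqP tn0.
  have := Hd t tn0; rewrite RabsE => /(_ td) /RltP.
  rewrite distrC /GRing.scale /= mulr1 (addrC t x) mulrC -RdivE.
  by [].
have dv : derivable f x 1 by apply/cvg_ex; exists l.
split => //.
by rewrite derive1E /derive (cvg_lim _ hc).
Qed.

Lemma G_eq (G : R -> R)
  (HG : forall y, derivable_pt_lim G y (Rtrigo_def.exp (- (y ^ 2)))%coqR)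
  (G0 : G 0 = 0) x : 0 < x -> G x = gauss_integral_proof.integral0_gauss x.
Proof.
move=> x0.
have cG : forall y, {for y, continuous (G : R^o -> R^o)}.
  move=> y; apply/continuity_pt_cvg.
  exact: derivable_continuous_pt (exist _ _ (HG y)).
have h1 : {within `[0, x], continuous (@gauss_fun R)}.
  by apply: continuous_subspaceT => y; exact: continuous_gauss_fun.
have h2 : derivable_oo_LRcontinuous (G : R^o -> R^o) 0 x.
  split.
  + move=> y _; exact: (derivable_pt_lim_mc (HG y)).1.
  + exact: cvg_at_right_filter (cG 0).
  + exact: cvg_at_left_filter (cG x).
have H := @continuous_FTC2 R gauss_fun G 0 x x0 h1 h2.
rewrite /gauss_integral_proof.integral0_gauss /Rintegral H; last first.
  move=> y _; rewrite (derivable_pt_lim_mc (HG y)).2 /gauss_fun RexpE.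
  by rewrite RoppE RpowE.

by rewrite G0 /=; exact: esym (subr0 _).
Qed.

Lemma G_sq_lim (G : R -> R)
  (HG : forall y, derivable_pt_lim G y (Rtrigo_def.exp (- (y ^ 2)))%coqR)
  (G0 : G 0 = 0) eps : (0 < eps)%coqR ->
  exists M, forall x, (M < x)%coqR -> (Rabs (G x ^ 2 - PI / 4) < eps)%coqR.
Proof.
move=> /RltP e0.
have := @gauss_integral_proof.cvg_integral0_gauss_sqr R.
move/cvgrPdist_lt => /(_ eps e0) [M [_ HM]].
exists (Rmax M 0) => x /RltP Mx.
have xM : M < x by apply: le_lt_trans Mx; apply/RleP; exact: Rmax_l.
have x0 : 0 < x by apply: le_lt_trans Mx; apply/RleP; exact: Rmax_r.
have := HM x xM; rewrite -(G_eq HG G0 x0) distrC => /RltP.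
rewrite RabsE RpowE PIE; rewrite IZRposE INRE; exact.
Qed.

End Bridge.

Open Scope R_scope.

Lemma G_sq_lim : forall G : R -> R, (forall y, derivable_pt_lim G y (exp (- y ^ 2))) -> G 0 = 0 -> forall eps, 0 < eps -> exists M, forall x, M < x -> Rabs (G x ^ 2 - PI / 4) < eps.
Proof. intros G HG H0. exact (Bridge.G_sq_lim HG H0). Qed.

Lemma dext (f g : R -> R) (x l l' : R) : (forall t, f t = g t) -> l = l' -> is_derive f x l -> is_derive g x l'.
Proof. intros H -> H'. apply (is_derive_ext f g x l' H H'). Qed.
Lemma dmult (f g : R -> R) x df dg : is_derive f x df -> is_derive g x dg ->
  is_derive (fun t => f t * g t) x (df * g x + f x * dg).
Proof.
  intros H1 H2. apply (is_derive_mult f g x df dg H1 H2). intros; apply Rmult_comm.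
Qed.

Lemma dplus (f g : R -> R) x df dg : is_derive f x df -> is_derive g x dg ->
  is_derive (fun t => f t + g t) x (df + dg).
Proof. intros H1 H2. apply (is_derive_plus f g x df dg H1 H2). Qed.

Lemma dminus (f g : R -> R) x df dg : is_derive f x df -> is_derive g x dg ->
  is_derive (fun t => f t - g t) x (df - dg).
Proof. intros H1 H2. apply (is_derive_minus f g x df dg H1 H2). Qed.

Lemma dscal (f : R -> R) x k df : is_derive f x df ->
  is_derive (fun t => k * f t) x (k * df).
Proof. apply is_derive_scal. Qed.

Lemma dcomp (f g : R -> R) x df dg : is_derive f (g x) df -> is_derive g x dg ->
  is_derive (fun t => f (g t)) x (dg * df).
Proof. intros H1 H2. apply (is_derive_comp f g x df dg H1 H2). Qed.

Lemma dconst (c x : R) : is_derive (fun _ => c) x 0.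
Proof. apply (@is_derive_const R_AbsRing R_NormedModule). Qed.

Lemma did (x : R) : is_derive (fun t => t) x 1.
Proof. apply (@is_derive_id R_AbsRing). Qed.

Lemma dlin (a x : R) : is_derive (fun t => a * t) x a.
Proof. apply (dext (fun t => a * t) _ x (a * 1) a). - intros; reflexivity. - ring. - apply dscal, did. Qed.


Fixpoint h (n : nat) (x : R) : R :=
  match n with
  | O => 1
  | S O => 2 * x
  | S ((S m) as p) => 2 * x * h p x - 2 * INR p * h m x
  end.

Lemma h_rec n x : h (S n) x = 2 * x * h n x - 2 * INR n * h (pred n) x.
Proof. destruct n as [|n]. simpl. ring. reflexivity. Qed.

Definition dh n x := 2 * INR n * h (pred n) x.

Lemma h_der_aux n : forall x, is_derive (h n) x (dh n x) /\ is_derive (h (S n)) x (dh (S n) x).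
Proof.
  induction n as [|n IH]; intros x.
  - split.
    + apply (dext (fun _ => 1) _ x 0 _); [intros; reflexivity | unfold dh; simpl; ring | apply dconst].
    + apply (dext (fun t => 2 * t) _ x 2 _); [intros; reflexivity | unfold dh; simpl; ring | apply dlin].
  - split; [apply (IH x)|].
    assert (E : forall t, 2 * t * h (S n) t - 2 * INR (S n) * h n t = h (S (S n)) t).
    { intros t. reflexivity. }
    eapply dext; [exact E| |].
    2: { apply dminus. apply dmult. apply dlin. apply (IH x). apply dscal. apply (IH x). }
    unfold dh. simpl pred. rewrite (h_rec n x).
    rewrite !S_INR. ring.
Qed.

Lemma h_der n x : is_derive (h n) x (dh n x).
Proof. apply (h_der_aux n x). Qed.

Lemma h_rec' n x : h (S n) x = 2 * x * h n x - dh n x.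
Proof. rewrite h_rec. unfold dh. ring. Qed.

Lemma dexpm2 x : is_derive (fun t => exp (- t ^ 2)) x (- 2 * x * exp (- x ^ 2)).
Proof.
  apply (dext (fun t => exp (- t ^ 2)) _ x (- 2 * x * exp (- x ^ 2))); [intros; reflexivity | reflexivity |].
  auto_derive; [auto|]. change (- (1 * ((1 + 1) * (x * 1))) * exp (- (x * (x * 1))) = -2 * x * exp (- x ^ 2)). simpl; ring.
Qed.

Lemma rodrigues n : forall x,
  Derive_n (fun t => exp (- t ^ 2)) n x = (-1) ^ n * h n x * exp (- x ^ 2).
Proof.
  induction n as [|n IH]; intros x.
  - simpl. ring.
  - change (Derive (Derive_n (fun t => exp (- t ^ 2)) n) x = (-1) ^ S n * h (S n) x * exp (- x ^ 2)).
    rewrite (Derive_ext _ (fun y => (-1) ^ n * h n y * exp (- y ^ 2)) x IH).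
    apply is_derive_unique.
    eapply dext; [intros; reflexivity | |].
    2: { apply dmult. apply dscal. apply h_der. apply dexpm2. }
    rewrite h_rec'. simpl. ring.
Qed.

Lemma hermite_h n x : hermite n x = h n x.
Proof.
  unfold hermite. rewrite rodrigues.
  replace ((-1) ^ n * exp (x ^ 2) * ((-1) ^ n * h n x * exp (- x ^ 2)))
    with (((-1) * (-1)) ^ n * (exp (x ^ 2) * exp (- x ^ 2)) * h n x)
    by (rewrite Rpow_mult_distr; ring).
  rewrite <- exp_plus. replace (x ^ 2 + - x ^ 2) with 0 by ring.
  rewrite exp_0. replace (-1 * -1) with 1 by ring. rewrite pow1. ring.
Qed.

Lemma abs2x x : Rabs (2 * x) <= 1 + x ^ 2.
Proof.
  rewrite Rabs_mult, Rabs_right by lra.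
  destruct (Rle_dec 0 x).
  - rewrite Rabs_right by lra. pose proof (pow2_ge_0 (x - 1)). nra.
  - rewrite Rabs_left by lra. pose proof (pow2_ge_0 (x + 1)). nra.
Qed.

Lemma h_bound_aux n : (exists C, 0 <= C /\ forall x, Rabs (h n x) <= C * (1 + x ^ 2) ^ n) /\
  (exists C, 0 <= C /\ forall x, Rabs (h (S n) x) <= C * (1 + x ^ 2) ^ (S n)).
Proof.
  induction n as [|n IH].
  - split.
    + exists 1. split; [lra|]. intros x. simpl. rewrite Rabs_R1. lra.
    + exists 1. split; [lra|]. intros x. change (h 1 x) with (2 * x). rewrite pow_1. pose proof (abs2x x). lra.
  - destruct IH as [[C0 [HC0 H0]] [C1 [HC1 H1]]].
    split; [exists C1; auto|].
    exists (C1 + 2 * INR (S n) * C0). split.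
    { pose proof (pos_INR (S n)). nra. }
    intros x.
    change (h (S (S n)) x) with (2 * x * h (S n) x - 2 * INR (S n) * h n x).
    set (q := 1 + x ^ 2).
    assert (Hq : 1 <= q) by (unfold q; nra).
    assert (Hqn : 1 <= q ^ n) by (apply pow_R1_Rle; lra).
    replace (q ^ S (S n)) with (q * q * q ^ n) by (simpl; ring).
    specialize (H1 x). specialize (H0 x). fold q in H1, H0.
    replace (q ^ S n) with (q * q ^ n) in H1 by (simpl; ring).
    pose proof (abs2x x) as Ha. fold q in Ha.
    pose proof (pos_INR (S n)) as Hn.
    eapply Rle_trans. apply Rabs_triang. rewrite Rabs_Ropp, (Rabs_mult (2 * x) (h (S n) x)), (Rabs_mult (2 * INR (S n)) (h n x)).
    rewrite (Rabs_right (2 * INR (S n))) by lra.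
    assert (A1 : Rabs (2 * x) * Rabs (h (S n) x) <= q * (C1 * (q * q ^ n))).
    { apply Rmult_le_compat; auto using Rabs_pos. }
    assert (A2 : 2 * INR (S n) * Rabs (h n x) <= 2 * INR (S n) * (C0 * q ^ n)).
    { apply Rmult_le_compat_l; lra. }
    assert (A3 : C0 * q ^ n <= C0 * (q * q * q ^ n)).
    { apply Rmult_le_compat_l; auto. rewrite <- (Rmult_1_l (q ^ n)) at 1. apply Rmult_le_compat_r; nra. }
    nra.
Qed.

Lemma h_bound n : exists C, 0 <= C /\ forall x, Rabs (h n x) <= C * (1 + x ^ 2) ^ n.
Proof. apply h_bound_aux. Qed.

Lemma exp_INR_mult (M : nat) t : exp (INR M * t) = exp t ^ M.
Proof.
  induction M as [|M IH].
  - simpl. rewrite Rmult_0_l. apply exp_0.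
  - rewrite S_INR. replace ((INR M + 1) * t) with (t + INR M * t) by ring.
    rewrite exp_plus, IH. simpl. ring.
Qed.

Lemma exp_lower c y M : 0 < c -> 0 <= y ->
  (1 + c * y / INR (S M)) ^ (S M) <= exp (c * y).
Proof.
  intros Hc Hy.
  assert (HM : 0 < INR (S M)) by apply lt_0_INR, Nat.lt_0_succ.
  replace (c * y) with (INR (S M) * (c * y / INR (S M))) at 2 by (field; lra).
  rewrite exp_INR_mult. apply pow_incr. split.
  - assert (0 <= c * y / INR (S M)) by (apply Rdiv_le_0_compat; nra). lra.
  - apply exp_ineq1_le.
Qed.

Lemma decay c N : 0 < c -> exists D, 0 <= D /\
  forall v, (1 + v ^ 2) ^ N * exp (- (c * v ^ 2)) <= D / (1 + v ^ 2).
Proof.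
  intros Hc.
  assert (HM : 0 < INR (S N)) by apply lt_0_INR, Nat.lt_0_succ.
  set (m := Rmin 1 (c / INR (S N))).
  assert (Hm0 : 0 < m) by (unfold m; apply Rmin_glb_lt; [lra | apply Rdiv_lt_0_compat; lra]).
  assert (Hm1 : m <= 1) by apply Rmin_l.
  assert (Hm2 : m <= c / INR (S N)) by apply Rmin_r.
  assert (HmM : 0 < m ^ S N) by (apply pow_lt; lra).
  exists (/ m ^ S N). split; [left; apply Rinv_0_lt_compat; lra|].
  intros v.
  set (y := v ^ 2).
  assert (Hy : 0 <= y) by (unfold y; apply pow2_ge_0).
  set (q := 1 + y).
  assert (Hq : 0 < q) by (unfold q; lra).
  assert (HqN : 0 < q ^ N) by (apply pow_lt; lra).
  assert (H1 : m * q <= 1 + c * y / INR (S N)).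
  { unfold q. replace (c * y / INR (S N)) with (c / INR (S N) * y) by (field; lra).
    assert (m * y <= c / INR (S N) * y) by (apply Rmult_le_compat_r; lra). nra. }
  assert (H2 : (m * q) ^ S N <= exp (c * y)).
  { eapply Rle_trans; [| apply exp_lower; lra]. apply pow_incr. split; [nra | exact H1]. }
  rewrite Rpow_mult_distr in H2.
  rewrite exp_Ropp.
  assert (HE : 0 < exp (c * y)) by apply exp_pos.
  replace (q ^ S N) with (q ^ N * q) in H2 by (simpl; ring).
  apply (Rmult_le_reg_r (exp (c * y) * q)). nra.
  replace (q ^ N * / exp (c * y) * (exp (c * y) * q)) with (q ^ N * q) by (field; lra).
  replace (/ m ^ S N / q * (exp (c * y) * q)) with (exp (c * y) / m ^ S N) by (field; lra).
  apply (Rmult_le_reg_r (m ^ S N)); [lra|].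
  replace (exp (c * y) / m ^ S N * m ^ S N) with (exp (c * y)) by (field; lra).
  nra.
Qed.

Lemma ball0 (eps : posreal) (y : R) : Rabs y < eps -> ball 0 eps y.
Proof. intros H. unfold ball; simpl. unfold AbsRing_ball, abs, minus, plus, opp; simpl. 
  replace (y + - 0) with y by ring. exact H. Qed.

Lemma small_bound D eps x : 0 <= D -> 0 < eps -> D / eps < Rabs x -> D / (1 + x ^ 2) < eps.
Proof.
  intros HD He Hx.
  assert (Hq : 0 < 1 + x ^ 2) by (pose proof (pow2_ge_0 x); lra).
  assert (Hax : Rabs x < 1 + x ^ 2).
  { destruct (Rle_dec 0 x); [rewrite Rabs_right by lra|rewrite Rabs_left by lra];
    pose proof (pow2_ge_0 (x - 1/2)); pose proof (pow2_ge_0 (x + 1/2)); nra. }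
  apply (Rmult_lt_reg_r (1 + x ^ 2)); [lra|].
  replace (D / (1 + x ^ 2) * (1 + x ^ 2)) with D by (field; lra).
  assert (D < eps * Rabs x).
  { apply (Rmult_lt_compat_l eps) in Hx; [|lra].
    replace (eps * (D / eps)) with D in Hx by (field; lra). lra. }
  nra.
Qed.

Lemma lim0_bound (f : R -> R) D : 0 <= D -> (forall v, Rabs (f v) <= D / (1 + v ^ 2)) ->
  filterlim f (Rbar_locally p_infty) (locally 0) /\ filterlim f (Rbar_locally m_infty) (locally 0).
Proof.
  intros HD Hf. split; apply filterlim_locally; intros eps.
  - exists (D / eps). intros x Hx. apply ball0.
    eapply Rle_lt_trans; [apply Hf|]. apply small_bound; auto. apply cond_pos.
    assert (0 <= D / eps) by (apply Rdiv_le_0_compat; [lra | apply cond_pos]).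
    rewrite Rabs_right; lra.
  - exists (- (D / eps)). intros x Hx. apply ball0.
    eapply Rle_lt_trans; [apply Hf|]. apply small_bound; auto. apply cond_pos.
    assert (0 <= D / eps) by (apply Rdiv_le_0_compat; [lra | apply cond_pos]).
    rewrite Rabs_left; lra.
Qed.

Notation MI := (Rbar_locally m_infty).
Notation PI_ := (Rbar_locally p_infty).

Lemma is_RInt_gen_ext_eq (f g : R -> R) (l l' : R) :
  (forall x, f x = g x) -> l = l' -> is_RInt_gen f MI PI_ l -> is_RInt_gen g MI PI_ l'.
Proof.
  intros H -> Hf. apply (is_RInt_gen_ext f g); [|exact Hf].
  apply filter_forall. intros ab x _. apply H.
Qed.

Lemma cmult (f g : R -> R) x : continuous f x -> continuous g x -> continuous (fun t => f t * g t) x.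
Proof.
  intros H1 H2. apply continuity_pt_filterlim. apply continuity_pt_filterlim in H1, H2.
  apply continuity_pt_mult; auto.
Qed.

Lemma cplus (f g : R -> R) x : continuous f x -> continuous g x -> continuous (fun t => f t + g t) x.
Proof.
  intros H1 H2. apply continuity_pt_filterlim. apply continuity_pt_filterlim in H1, H2.
  apply continuity_pt_plus; auto.
Qed.

Lemma cder (f : R -> R) (l x : R) : is_derive f x l -> continuous f x.
Proof. intros H. apply (ex_derive_continuous (K := R_AbsRing) (V := R_NormedModule)). exists l. exact H. Qed.

Lemma ibp (f g f' g' : R -> R) (L : R) :
  (forall x, is_derive f x (f' x)) -> (forall x, is_derive g x (g' x)) ->
  (forall x, continuous f' x) -> (forall x, continuous g' x) ->
  filterlim (fun x => f x * g x) MI (locally 0) ->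
  filterlim (fun x => f x * g x) PI_ (locally 0) ->
  is_RInt_gen (fun x => f' x * g x) MI PI_ L ->
  is_RInt_gen (fun x => f x * g' x) MI PI_ (- L).
Proof.
  intros df dg cf' cg' l1 l2 HL.
  set (P := fun x => f x * g x).
  assert (dP : forall x, is_derive P x (f' x * g x + f x * g' x)).
  { intros x. apply dmult; auto. }
  assert (DP : forall x, Derive P x = f' x * g x + f x * g' x).
  { intros x. apply is_derive_unique, dP. }
  assert (H' : is_RInt_gen (Derive P) MI PI_ (0 - 0)).
  { apply (is_RInt_gen_Derive (Fa := MI) (Fb := PI_) P 0 0).
    - apply filter_forall. intros ab x _. eexists. apply dP.
    - apply filter_forall. intros ab x _.
      apply continuous_ext with (fun x => f' x * g x + f x * g' x).
      { intros; symmetry; apply DP. }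
      apply cplus; apply cmult; auto; first [apply cder with (g' x); apply dg | apply cder with (f' x); apply df].
    - exact l1.
    - exact l2. }
  assert (H2 := is_RInt_gen_minus _ _ _ _ H' HL).
  apply (is_RInt_gen_ext_eq _ (fun x => f x * g' x) _ (- L)) in H2. exact H2.
  - intros x. simpl. rewrite DP. unfold minus, plus, opp; simpl. ring.
  - unfold minus, plus, opp; simpl. ring.
Qed.

Lemma ball_iff (l eps y : R) (He : 0 < eps) : ball l (mkposreal eps He) y <-> Rabs (y - l) < eps.
Proof. unfold ball; simpl. unfold AbsRing_ball, abs, minus, plus, opp; simpl. tauto. Qed.

Lemma lim_p (f : R -> R) l :
  (forall eps, 0 < eps -> exists M, forall x, M < x -> Rabs (f x - l) < eps) ->
  filterlim f PI_ (locally l).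
Proof.
  intros H. apply filterlim_locally. intros [eps He].
  destruct (H eps He) as [M HM]. exists M. intros x Hx. apply ball_iff. auto.
Qed.

Lemma lim_m (f : R -> R) l :
  (forall eps, 0 < eps -> exists M, forall x, x < M -> Rabs (f x - l) < eps) ->
  filterlim f MI (locally l).
Proof.
  intros H. apply filterlim_locally. intros [eps He].
  destruct (H eps He) as [M HM]. exists M. intros x Hx. apply ball_iff. auto.
Qed.

Lemma lim_p_inv (f : R -> R) l : filterlim f PI_ (locally l) ->
  forall eps, 0 < eps -> exists M, forall x, M < x -> Rabs (f x - l) < eps.
Proof.
  intros H eps He. apply filterlim_locally with (eps := mkposreal eps He) in H.
  destruct H as [M HM]. exists M. intros x Hx. apply (ball_iff l eps (f x) He). apply HM. exact Hx.
Qed.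

Definition gf (t : R) := exp (- t ^ 2).
Definition G (x : R) := RInt gf 0 x.

Lemma gf_cont t : continuous gf t.
Proof. apply cder with (- 2 * t * exp (- t ^ 2)). apply dexpm2. Qed.

Lemma G_ex a b : ex_RInt gf a b.
Proof. apply (ex_RInt_continuous (V := R_CompleteNormedModule)). intros; apply gf_cont. Qed.

Lemma G_der y : is_derive G y (gf y).
Proof.
  apply (is_derive_RInt gf G 0 y).
  - apply filter_forall. intros b. apply (RInt_correct (V := R_CompleteNormedModule)), G_ex.
  - apply gf_cont.
Qed.

Lemma G0 : G 0 = 0.
Proof. unfold G. apply (RInt_point (V := R_CompleteNormedModule)). Qed.

Lemma G_nonneg x : 0 <= x -> 0 <= G x.
Proof.
  intros Hx. unfold G. apply RInt_ge_0; auto. apply G_ex.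
  intros t _. unfold gf. left; apply exp_pos.
Qed.

Lemma G_odd x : G (- x) = - G x.
Proof.
  unfold G.
  assert (E := RInt_comp_lin gf (-1) 0 0 x).
  replace (-1 * 0 + 0) with 0 in E by ring.
  replace (-1 * x + 0) with (- x) in E by ring.
  rewrite <- E by apply G_ex.
  rewrite (RInt_ext _ (fun y => opp (gf y))).
  - rewrite (RInt_opp (V := R_CompleteNormedModule)) by apply G_ex. reflexivity.
  - intros t _. unfold gf, scal, opp; simpl. unfold mult; simpl.
    replace ((-1 * t + 0) * ((-1 * t + 0) * 1)) with (t * (t * 1)) by ring. ring.
Qed.

Lemma G_lim : filterlim G PI_ (locally (sqrt PI / 2)).
Proof.
  set (s := sqrt PI / 2).
  assert (Hs : 0 < s) by (unfold s; assert (0 < sqrt PI) by (apply sqrt_lt_R0, PI_RGT_0); lra).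
  assert (Hs2 : s ^ 2 = PI / 4).
  { unfold s. replace ((sqrt PI / 2) ^ 2) with (sqrt PI * sqrt PI / 4) by (simpl; field).
    rewrite sqrt_sqrt; [reflexivity | left; apply PI_RGT_0]. }
  apply lim_p. intros eps He.
  destruct (G_sq_lim G (fun y => proj1 (is_derive_Reals _ _ _) (G_der y)) G0 (eps * s)) as [M HM].
  { nra. }
  exists (Rmax M 0). intros x Hx.
  assert (HxM : M < x) by (eapply Rle_lt_trans; [apply Rmax_l | exact Hx]).
  assert (Hx0 : 0 < x) by (eapply Rle_lt_trans; [apply Rmax_r | exact Hx]).
  specialize (HM x HxM). rewrite <- Hs2 in HM.
  pose proof (G_nonneg x (Rlt_le _ _ Hx0)) as Gn.
  replace (G x ^ 2 - s ^ 2) with ((G x - s) * (G x + s)) in HM by ring.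
  rewrite Rabs_mult, (Rabs_right (G x + s)) in HM by lra.
  assert (Rabs (G x - s) * s <= Rabs (G x - s) * (G x + s)).
  { apply Rmult_le_compat_l; [apply Rabs_pos | lra]. }
  nra.
Qed.

Lemma gauss_int a : 0 < a -> is_RInt_gen (fun v => exp (- (a * v) ^ 2)) MI PI_ (sqrt PI / a).
Proof.
  intros Ha.
  set (s := sqrt PI / 2).
  set (P := fun y => / a * G (a * y)).
  assert (dP : forall y, is_derive P y (exp (- (a * y) ^ 2))).
  { intros y. apply (dext (fun y => / a * G (a * y)) _ y (/ a * (a * gf (a * y)))).
    - intros; reflexivity.
    - unfold gf. field. lra.
    - apply dscal. apply (dcomp G (fun y => a * y)). apply G_der. apply dlin. }
  assert (DP : forall y, Derive P y = exp (- (a * y) ^ 2)).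
  { intros; apply is_derive_unique, dP. }
  assert (HG := lim_p_inv _ _ G_lim).
  assert (H : is_RInt_gen (Derive P) MI PI_ (s / a - - (s / a))).
  { apply (is_RInt_gen_Derive (Fa := MI) (Fb := PI_) P (- (s / a)) (s / a)).
    - apply filter_forall. intros ab x _. eexists. apply dP.
    - apply filter_forall. intros ab x _.
      apply continuous_ext with (fun y => exp (- (a * y) ^ 2)).
      { intros; symmetry; apply DP. }
      apply cder with (a * (- 2 * (a * x) * exp (- (a * x) ^ 2))).
      apply (dcomp (fun t => exp (- t ^ 2)) (fun y => a * y)). apply dexpm2. apply dlin.
    - apply lim_m. intros eps He.
      destruct (HG (eps * a)) as [M HM]. nra.
      exists (- M / a). intros x Hx.
      assert (Hax : M < - (a * x)).
      { apply (Rmult_lt_compat_l a) in Hx; auto. replace (a * (- M / a)) with (- M) in Hx by (field; lra). lra. }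
      specialize (HM _ Hax). unfold P. replace (- (a * x)) with (- (a * x)) in HM by reflexivity.
      replace (a * x) with (- (- (a * x))) by ring. rewrite G_odd.
      replace (/ a * - G (- (a * x)) - - (s / a)) with (- ((G (- (a * x)) - s) / a)) by (field; lra).
      rewrite Rabs_Ropp. unfold Rdiv. rewrite Rabs_mult, (Rabs_right (/ a)) by (left; apply Rinv_0_lt_compat; lra).
      apply (Rmult_lt_reg_r a); auto. rewrite Rmult_assoc, Rinv_l, Rmult_1_r by lra. exact HM.
    - apply lim_p. intros eps He.
      destruct (HG (eps * a)) as [M HM]. nra.
      exists (M / a). intros x Hx.
      assert (Hax : M < a * x).
      { apply (Rmult_lt_compat_l a) in Hx; auto. replace (a * (M / a)) with M in Hx by (field; lra). lra. }
      specialize (HM _ Hax). unfold P.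
      replace (/ a * G (a * x) - s / a) with ((G (a * x) - s) / a) by (field; lra).
      unfold Rdiv. rewrite Rabs_mult, (Rabs_right (/ a)) by (left; apply Rinv_0_lt_compat; lra).
      apply (Rmult_lt_reg_r a); auto. rewrite Rmult_assoc, Rinv_l, Rmult_1_r by lra. exact HM. }
  apply (is_RInt_gen_ext_eq _ _ _ (sqrt PI / a) DP) in H. exact H.
  unfold s. field. lra.
Qed.

Lemma iscal (f : R -> R) c l : is_RInt_gen f MI PI_ l -> is_RInt_gen (fun x => c * f x) MI PI_ (c * l).
Proof. intros H. apply (is_RInt_gen_scal f c l H). Qed.

Lemma iplus (f g : R -> R) l1 l2 : is_RInt_gen f MI PI_ l1 -> is_RInt_gen g MI PI_ l2 ->
  is_RInt_gen (fun x => f x + g x) MI PI_ (l1 + l2).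
Proof. intros H1 H2. apply (is_RInt_gen_plus f g l1 l2 H1 H2). Qed.

Lemma izero : is_RInt_gen (fun _ => 0) MI PI_ 0.
Proof.
  apply (is_RInt_gen_ext_eq (fun x => 0 * exp (- (1 * x) ^ 2)) _ (0 * (sqrt PI / 1)) 0).
  - intros; ring.
  - ring.
  - apply iscal, gauss_int; lra.
Qed.

Section Herm.
Variables a b : R.
Hypothesis Ha : 0 < a.
Hypothesis Hb : 0 < b.

Definition fl l v := h l (b * v).
Definition gk k v := h k (a * v) * exp (- (a * v) ^ 2).
Definition F l k v := fl l v * gk k v.

Lemma fl_der l v : is_derive (fl l) v (b * dh l (b * v)).
Proof. apply (dcomp (h l) (fun v => b * v)). apply h_der. apply dlin. Qed.

Lemma gk_der k v : is_derive (gk k) v (- a * gk (S k) v).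
Proof.
  unfold gk.
  apply (dext (fun v => h k (a * v) * exp (- (a * v) ^ 2)) _ v
     (a * dh k (a * v) * exp (- (a * v) ^ 2) + h k (a * v) * (a * (- 2 * (a * v) * exp (- (a * v) ^ 2))))).
  - intros; reflexivity.
  - rewrite h_rec'. ring.
  - apply (dmult (fun t => h k (a * t)) (fun t => exp (- (a * t) ^ 2))). apply (dcomp (h k) (fun v => a * v)). apply h_der. apply dlin.
    apply (dcomp (fun t => exp (- t ^ 2)) (fun v => a * v)). apply dexpm2. apply dlin.
Qed.

Lemma dh_cont l v : continuous (fun v => b * dh l (b * v)) v.
Proof.
  unfold dh. destruct l as [|l].
  - apply continuous_ext with (fun _ => 0). { intros; simpl; ring. }
    apply cder with 0. apply dconst.
  - apply cder with (b * (2 * INR (S l) * (b * dh l (b * v)))).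
    apply dscal. apply dscal. apply fl_der.
Qed.

Lemma gk_cont k v : continuous (fun v => - a * gk (S k) v) v.
Proof. apply cder with (- a * (- a * gk (S (S k)) v)). apply dscal, gk_der. Qed.

Lemma F_bound l k : exists D, 0 <= D /\ forall v, Rabs (F l k v) <= D / (1 + v ^ 2).
Proof.
  destruct (h_bound l) as [Cl [HCl Hl]].
  destruct (h_bound k) as [Ck [HCk Hk]].
  destruct (decay (a ^ 2) (l + k)) as [D0 [HD0 HD]]. { apply pow_lt; lra. }
  exists (Cl * Ck * (1 + b ^ 2) ^ l * (1 + a ^ 2) ^ k * D0). split.
  { repeat apply Rmult_le_pos; auto; apply pow_le; pose proof (pow2_ge_0 a); pose proof (pow2_ge_0 b); lra. }
  intros v. unfold F, fl, gk.
  set (q := 1 + v ^ 2).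
  assert (Hq : 0 < q) by (unfold q; pose proof (pow2_ge_0 v); lra).
  assert (B1 : Rabs (h l (b * v)) <= Cl * (1 + b ^ 2) ^ l * q ^ l).
  { eapply Rle_trans; [apply Hl|]. rewrite Rmult_assoc, <- Rpow_mult_distr.
    apply Rmult_le_compat_l; auto. apply pow_incr. split.
    - pose proof (pow2_ge_0 (b * v)); lra.
    - unfold q. pose proof (pow2_ge_0 v); pose proof (pow2_ge_0 b).
      replace ((b * v) ^ 2) with (b ^ 2 * v ^ 2) by ring. nra. }
  assert (B2 : Rabs (h k (a * v)) <= Ck * (1 + a ^ 2) ^ k * q ^ k).
  { eapply Rle_trans; [apply Hk|]. rewrite Rmult_assoc, <- Rpow_mult_distr.
    apply Rmult_le_compat_l; auto. apply pow_incr. split.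
    - pose proof (pow2_ge_0 (a * v)); lra.
    - unfold q. pose proof (pow2_ge_0 v); pose proof (pow2_ge_0 a).
      replace ((a * v) ^ 2) with (a ^ 2 * v ^ 2) by ring. nra. }
  specialize (HD v). fold q in HD.
  replace ((a * v) ^ 2) with (a ^ 2 * v ^ 2) by ring.
  rewrite !Rabs_mult, (Rabs_right (exp _)) by (left; apply exp_pos).
  assert (He : 0 < exp (- (a ^ 2 * v ^ 2))) by apply exp_pos.
  rewrite pow_add in HD.
  assert (P1 : Rabs (h l (b * v)) * (Rabs (h k (a * v)) * exp (- (a ^ 2 * v ^ 2)))
     <= (Cl * (1 + b ^ 2) ^ l * q ^ l) * ((Ck * (1 + a ^ 2) ^ k * q ^ k) * exp (- (a ^ 2 * v ^ 2)))).
  { apply Rmult_le_compat; try apply Rabs_pos.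
    - apply Rmult_le_pos; [apply Rabs_pos | lra].
    - exact B1.
    - apply Rmult_le_compat_r; [lra | exact B2]. }
  eapply Rle_trans; [exact P1|].
  replace (Cl * (1 + b ^ 2) ^ l * q ^ l * (Ck * (1 + a ^ 2) ^ k * q ^ k * exp (- (a ^ 2 * v ^ 2))))
    with ((Cl * Ck * (1 + b ^ 2) ^ l * (1 + a ^ 2) ^ k) * (q ^ l * q ^ k * exp (- (a ^ 2 * v ^ 2)))) by ring.
  replace (Cl * Ck * (1 + b ^ 2) ^ l * (1 + a ^ 2) ^ k * D0 / q)
    with ((Cl * Ck * (1 + b ^ 2) ^ l * (1 + a ^ 2) ^ k) * (D0 / q)) by (field; lra).
  apply Rmult_le_compat_l.
  { repeat apply Rmult_le_pos; auto; apply pow_le; pose proof (pow2_ge_0 a); pose proof (pow2_ge_0 b); lra. }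
  exact HD.
Qed.

Lemma F_lim l k : filterlim (fun v => fl l v * gk k v) MI (locally 0) /\
                  filterlim (fun v => fl l v * gk k v) PI_ (locally 0).
Proof.
  destruct (F_bound l k) as [D [HD H]].
  destruct (lim0_bound (F l k) D HD H). split; assumption.
Qed.

Lemma F_rec m k v : F (S m) k v = b / a * F m (S k) v + 2 * INR k * (b / a) * F m (pred k) v
   - 2 * INR m * F (pred m) k v.
Proof.
  unfold F, fl, gk. rewrite (h_rec m (b * v)), (h_rec k (a * v)). field. lra.
Qed.

Lemma F00 v : exp (- (a * v) ^ 2) = F 0 0 v.
Proof. unfold F, fl, gk. simpl. ring. Qed.

Lemma ibp_step l k (L : R) : is_RInt_gen (F l k) MI PI_ L ->
  is_RInt_gen (F (S l) (S k)) MI PI_ (b * 2 * INR (S l) / a * L).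
Proof.
  intros HL.
  assert (H := ibp (fl (S l)) (gk k) (fun v => b * dh (S l) (b * v)) (fun v => - a * gk (S k) v)
     (b * 2 * INR (S l) * L) (fl_der (S l)) (gk_der k) (dh_cont (S l)) (gk_cont k)
     (proj1 (F_lim (S l) k)) (proj2 (F_lim (S l) k))).
  assert (H2 : is_RInt_gen (fun v => fl (S l) v * (- a * gk (S k) v)) MI PI_ (- (b * 2 * INR (S l) * L))).
  { apply H. apply (is_RInt_gen_ext_eq (fun v => (b * 2 * INR (S l)) * F l k v) _ (b * 2 * INR (S l) * L)).
    - intros v. unfold F, fl, dh. simpl pred. ring.
    - reflexivity.
    - apply iscal, HL. }
  apply (iscal _ (- / a)) in H2.
  apply (is_RInt_gen_ext_eq _ (F (S l) (S k)) _ (b * 2 * INR (S l) / a * L)) in H2. exact H2.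
  - intros v. unfold F. field. lra.
  - field. lra.
Qed.

Lemma ibp0 k : is_RInt_gen (F 0 (S k)) MI PI_ 0.
Proof.
  assert (H := ibp (fl 0) (gk k) (fun v => b * dh 0 (b * v)) (fun v => - a * gk (S k) v)
     0 (fl_der 0) (gk_der k) (dh_cont 0) (gk_cont k)
     (proj1 (F_lim 0 k)) (proj2 (F_lim 0 k))).
  assert (H2 : is_RInt_gen (fun v => fl 0 v * (- a * gk (S k) v)) MI PI_ (- 0)).
  { apply H. apply (is_RInt_gen_ext_eq (fun _ => 0) _ 0).
    - intros v. unfold dh. simpl. ring.
    - reflexivity.
    - apply izero. }
  apply (iscal _ (- / a)) in H2.
  apply (is_RInt_gen_ext_eq _ (F 0 (S k)) _ 0) in H2. exact H2.
  - intros v. unfold F. field. lra.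
  - ring.
Qed.

Lemma F_ex_aux n : forall l, (l <= n)%nat -> forall k, exists L, is_RInt_gen (F l k) MI PI_ L.
Proof.
  induction n as [|n IH]; intros l Hl k.
  - assert (l = 0%nat) by lia. subst l. destruct k as [|k].
    + exists (sqrt PI / a). apply (is_RInt_gen_ext_eq _ _ _ _ F00 (eq_refl _)). apply gauss_int; lra.
    + exists 0. apply ibp0.
  - destruct (Nat.eq_dec l (S n)) as [->|Hne]; [|apply IH; lia].
    destruct (IH n (le_n n) (S k)) as [L1 H1].
    destruct (IH n (le_n n) (pred k)) as [L2 H2].
    destruct (IH (pred n) (Nat.le_pred_l n) k) as [L3 H3].
    exists (b / a * L1 + 2 * INR k * (b / a) * L2 + (- (2 * INR n)) * L3).
    apply (is_RInt_gen_ext_eq (fun v => b / a * F n (S k) v + 2 * INR k * (b / a) * F n (pred k) v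
       + (- (2 * INR n)) * F (pred n) k v) _ (b / a * L1 + 2 * INR k * (b / a) * L2 + (- (2 * INR n)) * L3)).
    + intros v. rewrite F_rec. ring.
    + reflexivity.
    + apply iplus. apply iplus. apply iscal, H1. apply iscal, H2. apply iscal, H3.
Qed.

Lemma F_ex l k : exists L, is_RInt_gen (F l k) MI PI_ L.
Proof. apply (F_ex_aux l l (le_n l)). Qed.

Definition K l k : R := RInt_gen (F l k) MI PI_.

Lemma K_uniq l k L : is_RInt_gen (F l k) MI PI_ L -> K l k = L.
Proof. intros H. unfold K. apply (is_RInt_gen_unique (F l k) L H). Qed.

Lemma K_is l k : is_RInt_gen (F l k) MI PI_ (K l k).
Proof. destruct (F_ex l k) as [L H]. rewrite (K_uniq _ _ _ H). exact H. Qed.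

Lemma K00 : K 0 0 = sqrt PI / a.
Proof. apply K_uniq. apply (is_RInt_gen_ext_eq _ _ _ _ F00 (eq_refl _)). apply gauss_int; lra. Qed.

Lemma K0S k : K 0 (S k) = 0.
Proof. apply K_uniq, ibp0. Qed.

Lemma KSS l k : K (S l) (S k) = b * 2 * INR (S l) / a * K l k.
Proof. apply K_uniq, ibp_step, K_is. Qed.

Lemma Krec m k : K (S m) k = b / a * K m (S k) + 2 * INR k * (b / a) * K m (pred k) - 2 * INR m * K (pred m) k.
Proof.
  apply K_uniq.
  apply (is_RInt_gen_ext_eq (fun v => b / a * F m (S k) v + 2 * INR k * (b / a) * F m (pred k) v
       + (- (2 * INR m)) * F (pred m) k v) _ (b / a * K m (S k) + 2 * INR k * (b / a) * K m (pred k) + (- (2 * INR m)) * K (pred m) k)).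
  + intros v. rewrite F_rec. ring.
  + ring.
  + apply iplus. apply iplus. apply iscal, K_is. apply iscal, K_is. apply iscal, K_is.
Qed.

End Herm.

Section Kfacts.
Variables a b : R.
Hypothesis Ha : 0 < a.
Hypothesis Hb : 0 < b.

Lemma K_lt l k : (l < k)%nat -> K a b l k = 0.
Proof.
  revert k. induction l as [|l IH]; intros k Hk.
  - destruct k as [|k]; [lia|]. apply K0S; auto.
  - destruct k as [|k]; [lia|]. rewrite KSS by auto. rewrite IH by lia. ring.
Qed.

Lemma K_odd_aux n : forall l, (l <= n)%nat -> forall k, Nat.odd (l + k) = true -> K a b l k = 0.
Proof.
  induction n as [|n IH]; intros l Hl k Hodd.
  - assert (l = 0%nat) by lia. subst l. destruct k as [|k]; [discriminate|]. apply K0S; auto.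
  - destruct (Nat.eq_dec l (S n)) as [->|Hne]; [|apply IH; auto; lia].
    rewrite Krec by auto.
    rewrite (IH n (le_n n) (S k)) by (replace (n + S k)%nat with (S n + k)%nat by lia; exact Hodd).
    replace (2 * INR k * (b / a) * K a b n (pred k)) with 0.
    2: { destruct k as [|k]. simpl; ring. simpl pred. rewrite (IH n (le_n n) k). ring.
         rewrite <- Hodd. replace (S n + S k)%nat with (S (S (n + k))) by lia.
         rewrite Nat.odd_succ_succ. reflexivity. }
    replace (2 * INR n * K a b (pred n) k) with 0. ring.
    destruct n as [|n]. simpl; ring. simpl pred. rewrite (IH n (le_S _ _ (le_n n)) k). ring.
    rewrite <- Hodd. replace (S (S n) + k)%nat with (S (S (n + k))) by lia.
    rewrite Nat.odd_succ_succ. reflexivity.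
Qed.

Lemma K_odd l k : Nat.odd (l + k) = true -> K a b l k = 0.
Proof. apply (K_odd_aux l l (le_n l)). Qed.

Lemma K_iv m k : (INR (S m) - INR k) * K a b (S m) k = INR (S m) * (b / a - a / b) * K a b m (S k).
Proof.
  assert (E : forall k, 2 * INR m * K a b (pred m) k = a / b * K a b m (S k)).
  { intros j. destruct m as [|m].
    - rewrite K0S by auto. simpl; ring.
    - rewrite KSS by auto. simpl pred. field; lra. }
  destruct k as [|k].
  - rewrite Krec by auto. simpl pred. rewrite E. simpl INR. field; lra.
  - assert (E2 : K a b (S m) (S k) = b * 2 * INR (S m) / a * K a b m k) by (apply KSS; auto).
    assert (H1 := Krec a b Ha m (S k)). simpl pred in H1. rewrite E in H1.
    replace ((INR (S m) - INR (S k)) * K a b (S m) (S k))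
      with (INR (S m) * K a b (S m) (S k) - INR (S k) * K a b (S m) (S k)) by ring.
    rewrite H1 at 1. rewrite E2. field; lra.
Qed.
End Kfacts.

Lemma sqrt2_pos : 0 < sqrt 2.
Proof. apply sqrt_lt_R0; lra. Qed.

Lemma hnorm_pos be k : 0 < be -> 0 < hnorm be k.
Proof.
  intros H. unfold hnorm. apply Rdiv_lt_0_compat. apply sqrt_lt_R0; auto.
  apply Rmult_lt_0_compat. unfold Rpower. apply exp_pos.
  apply sqrt_lt_R0. apply Rmult_lt_0_compat. apply pow_lt; lra. apply lt_0_INR. apply lt_O_fact.
Qed.

Lemma hnorm_S be k : 0 < be -> hnorm be (S k) = hnorm be k / (sqrt 2 * sqrt (INR (S k))).
Proof.
  intros H. unfold hnorm.
  replace (2 ^ S k * INR (fact (S k))) with ((2 ^ k * INR (fact k)) * (2 * INR (S k))).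
  2: { rewrite fact_simpl, mult_INR. simpl. ring. }
  assert (P1 : 0 < 2 ^ k * INR (fact k)).
  { apply Rmult_lt_0_compat. apply pow_lt; lra. apply lt_0_INR. apply lt_O_fact. }
  assert (P2 : 0 < INR (S k)) by (apply lt_0_INR; lia).
  rewrite !sqrt_mult by lra.
  assert (0 < sqrt (2 ^ k * INR (fact k))) by (apply sqrt_lt_R0; auto).
  assert (0 < sqrt (INR (S k))) by (apply sqrt_lt_R0; auto).
  assert (0 < Rpower (2 * PI) (1 / 4)) by (unfold Rpower; apply exp_pos).
  pose proof sqrt2_pos.
  rewrite (sqrt_mult 2 (INR (S k))) by lra. field. repeat split; lra.
Qed.

Section Tfacts.
Variables beta beta' : R.
Hypothesis hb : 0 < beta.
Hypothesis hb' : 0 < beta'.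

Let aa := beta / sqrt 2.
Let bb := beta' / sqrt 2.
Let Ha : 0 < aa.
Proof. unfold aa. apply Rdiv_lt_0_compat; auto. apply sqrt2_pos. Qed.
Let Hb : 0 < bb.
Proof. unfold bb. apply Rdiv_lt_0_compat; auto. apply sqrt2_pos. Qed.

Let ratio : bb / aa = beta' / beta.
Proof. unfold aa, bb. pose proof sqrt2_pos. field. split; lra. Qed.

Lemma Tnat_K l k : Tnat beta beta' l k = hnorm beta' l * hnorm beta k * K aa bb l k.
Proof.
  unfold Tnat. apply (is_RInt_gen_unique (V := R_CompleteNormedModule)).
  apply (is_RInt_gen_ext_eq (fun v => hnorm beta' l * hnorm beta k * F aa bb l k v) _ (hnorm beta' l * hnorm beta k * K aa bb l k)).
  - intros v. unfold scaled_hermite, scaled_hermite_fun, F, fl, gk.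
    rewrite !hermite_h. unfold aa, bb.
    pose proof sqrt2_pos.
    replace (beta' * v / sqrt 2) with (beta' / sqrt 2 * v) by (field; lra).
    replace (beta * v / sqrt 2) with (beta / sqrt 2 * v) by (field; lra).
    replace (- (beta ^ 2 * v ^ 2) / 2) with (- (beta / sqrt 2 * v) ^ 2).
    + ring.
    + replace ((beta / sqrt 2 * v) ^ 2) with (beta ^ 2 * v ^ 2 / (sqrt 2 * sqrt 2)) by (field; lra).
      rewrite sqrt_sqrt by lra. field.
  - reflexivity.
  - apply iscal, K_is; auto.
Qed.

Lemma sq_facts n : 0 < sqrt (INR (S n)) /\ sqrt (INR (S n)) * sqrt (INR (S n)) = INR (S n).
Proof.
  assert (0 < INR (S n)) by (apply lt_0_INR; lia).
  split. apply sqrt_lt_R0; auto. apply sqrt_sqrt; lra.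
Qed.

Lemma T_ii l k : Tnat beta beta' l k = beta / beta' * sqrt (INR (S k) / INR (S l)) * Tnat beta beta' (S l) (S k).
Proof.
  rewrite !Tnat_K, KSS by auto. rewrite !hnorm_S by auto.
  rewrite sqrt_div_alt by (apply lt_0_INR; lia).
  replace (bb * 2 * INR (S l) / aa) with (bb / aa * 2 * INR (S l)) by (field; lra).
  rewrite ratio.
  destruct (sq_facts l) as [P1 E1]. destruct (sq_facts k) as [P2 E2].
  pose proof sqrt2_pos.
  set (sl := sqrt (INR (S l))) in *. set (sk := sqrt (INR (S k))) in *.
  replace (beta' / beta * 2 * INR (S l)) with (beta' / beta * ((sqrt 2 * sqrt 2) * (sl * sl))) by (rewrite E1, sqrt_sqrt; lra). field. repeat split; lra.
Qed.

Lemma T_diag l : Tnat beta beta' l l = Rpower (beta' / beta) (INR l + 1 / 2).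
Proof.
  assert (Hr : 0 < beta' / beta) by (apply Rdiv_lt_0_compat; auto).
  induction l as [|l IH].
  - rewrite Tnat_K, K00 by auto. unfold hnorm. simpl.
    rewrite Rmult_1_r, sqrt_1, !Rmult_1_r.
    replace (0 + 1 / 2) with (/ 2) by field. rewrite Rpower_sqrt by auto.
    set (c := Rpower (2 * PI) (1 / 4)).
    assert (Hc : c * c = sqrt 2 * sqrt PI).
    { unfold c. rewrite <- Rpower_plus. replace (1 / 4 + 1 / 4) with (/ 2) by field.
      rewrite Rpower_sqrt. apply sqrt_mult; [lra | left; apply PI_RGT_0].
      pose proof PI_RGT_0; lra. }
    assert (0 < c) by (unfold c, Rpower; apply exp_pos).
    assert (0 < sqrt PI) by (apply sqrt_lt_R0, PI_RGT_0).
    pose proof sqrt2_pos.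
    assert (Eb : sqrt beta * sqrt beta = beta) by (apply sqrt_sqrt; lra).
    assert (0 < sqrt beta) by (apply sqrt_lt_R0; auto).
    rewrite sqrt_div_alt by auto. unfold aa.
    replace (sqrt beta' / c * (sqrt beta / c) * (sqrt PI / (beta / sqrt 2)))
      with (sqrt beta' * sqrt beta * sqrt PI * sqrt 2 / ((c * c) * beta)) by (field; repeat split; lra).
    set (sb := sqrt beta) in *. rewrite Hc, <- Eb. field. repeat split; lra.
  - pose proof (T_ii l l) as E. rewrite IH in E.
    replace (INR (S l) / INR (S l)) with 1 in E by (field; apply not_0_INR; lia).
    rewrite sqrt_1, Rmult_1_r in E.
    rewrite S_INR. replace (INR l + 1 + 1 / 2) with (1 + (INR l + 1 / 2)) by ring.
    rewrite Rpower_plus, Rpower_1 by auto. rewrite E. field. split; lra.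
Qed.

Let ratio' : aa / bb = beta / beta'.
Proof. unfold aa, bb. pose proof sqrt2_pos. field. split; lra. Qed.

Lemma T_iv m k : INR (S m) - INR k <> 0 ->
  Tnat beta beta' (S m) k = sqrt (INR (S m) * INR (S k)) / (INR (S m) - INR k)
     * (beta' / beta - beta / beta') * Tnat beta beta' m (S k).
Proof.
  intros Hne.
  pose proof (K_iv aa bb Ha Hb m k) as E. rewrite ratio, ratio' in E.
  rewrite !Tnat_K, !hnorm_S by auto.
  destruct (sq_facts m) as [P1 E1]. destruct (sq_facts k) as [P2 E2].
  pose proof sqrt2_pos.
  assert (E3 : sqrt 2 * sqrt 2 = 2) by (apply sqrt_sqrt; lra).
  rewrite sqrt_mult by (left; apply lt_0_INR; lia).
  set (sm := sqrt (INR (S m))) in *. set (sk := sqrt (INR (S k))) in *.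
  set (X := K aa bb m (S k)) in *. set (Y := K aa bb (S m) k) in *.
  set (r := beta' / beta - beta / beta') in *.
  replace (sm * sk / (INR (S m) - INR k) * r * (hnorm beta' m * (hnorm beta k / (sqrt 2 * sk)) * X))
    with (sm * sk / (INR (S m) - INR k) * (hnorm beta' m * (hnorm beta k / (sqrt 2 * sk))) * (INR (S m) * r * X) / INR (S m))
    by (field; repeat split; try lra; rewrite <- E1; nra).
  rewrite <- E. rewrite <- E1. field. repeat split; try lra.
Qed.

Lemma T_iii m k : Tnat beta beta' (S m) k =
    beta' / beta * sqrt (INR (S k) / INR (S m)) * Tnat beta beta' m (S k)
  + beta' / beta * sqrt (INR k / INR (S m)) * Tnat beta beta' m (pred k)
  - sqrt (INR m / INR (S m)) * Tnat beta beta' (pred m) k.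
Proof.
  rewrite !Tnat_K. rewrite (Krec aa bb Ha m k), ratio.
  pose proof sqrt2_pos.
  assert (E3 : sqrt 2 * sqrt 2 = 2) by (apply sqrt_sqrt; lra).
  destruct (sq_facts m) as [P1 E1].
  rewrite (hnorm_S beta' m) by auto.
  assert (A1 : hnorm beta' m / (sqrt 2 * sqrt (INR (S m))) * hnorm beta k * (beta' / beta * K aa bb m (S k))
     = beta' / beta * sqrt (INR (S k) / INR (S m)) * (hnorm beta' m * hnorm beta (S k) * K aa bb m (S k))).
  { rewrite (hnorm_S beta k) by auto. destruct (sq_facts k) as [P2 E2].
    rewrite sqrt_div_alt by (apply lt_0_INR; lia).
    set (sm := sqrt (INR (S m))) in *. set (sk := sqrt (INR (S k))) in *.
    field. repeat split; lra. }
  assert (A2 : hnorm beta' m / (sqrt 2 * sqrt (INR (S m))) * hnorm beta k * (2 * INR k * (beta' / beta) * K aa bb m (pred k))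
     = beta' / beta * sqrt (INR k / INR (S m)) * (hnorm beta' m * hnorm beta (pred k) * K aa bb m (pred k))).
  { destruct k as [|k].
    - simpl INR. rewrite Rdiv_0_l, sqrt_0. ring.
    - rewrite (hnorm_S beta k) by auto. destruct (sq_facts k) as [P2 E2]. simpl pred.
      rewrite sqrt_div_alt by (apply lt_0_INR; lia).
      set (sm := sqrt (INR (S m))) in *. set (sk := sqrt (INR (S k))) in *.
      rewrite <- E2. replace (2 * (sk * sk)) with (sqrt 2 * sqrt 2 * (sk * sk)) by (rewrite E3; ring).
      field. repeat split; lra. }
  assert (A3 : hnorm beta' m / (sqrt 2 * sqrt (INR (S m))) * hnorm beta k * (2 * INR m * K aa bb (pred m) k)
     = sqrt (INR m / INR (S m)) * (hnorm beta' (pred m) * hnorm beta k * K aa bb (pred m) k)).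
  { destruct m as [|m].
    - simpl INR. rewrite Rdiv_0_l, sqrt_0. ring.
    - rewrite (hnorm_S beta' m) by auto. destruct (sq_facts m) as [P3 E4]. simpl pred.
      rewrite sqrt_div_alt by (apply lt_0_INR; lia).
      set (sm := sqrt (INR (S (S m)))) in *. set (sk := sqrt (INR (S m))) in *.
      rewrite <- E4. replace (2 * (sk * sk)) with (sqrt 2 * sqrt 2 * (sk * sk)) by (rewrite E3; ring).
      field. repeat split; lra. }
  rewrite <- A1, <- A2, <- A3. ring.
Qed.
End Tfacts.

Lemma T_nat be be' n m : T be be' (Z.of_nat n) (Z.of_nat m) = Tnat be be' n m.
Proof.
  unfold T. replace (Z.ltb (Z.of_nat n) 0) with false by (symmetry; apply Z.ltb_ge; lia).
  replace (Z.ltb (Z.of_nat m) 0) with false by (symmetry; apply Z.ltb_ge; lia).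
  simpl. rewrite !Nat2Z.id. reflexivity.
Qed.

Lemma T_negl be be' l k : (l < 0)%Z -> T be be' l k = 0.
Proof. intros H. unfold T. replace (Z.ltb l 0) with true by (symmetry; apply Z.ltb_lt; lia). reflexivity. Qed.

Lemma T_negk be be' l k : (k < 0)%Z -> T be be' l k = 0.
Proof. intros H. unfold T. replace (Z.ltb k 0) with true by (symmetry; apply Z.ltb_lt; lia).
  rewrite Bool.orb_true_r. reflexivity. Qed.

Lemma odd_conv n m : Z.odd (Z.of_nat n + Z.of_nat m) = true -> Nat.odd (n + m) = true.
Proof.
  intros H. apply Z.odd_spec in H. destruct H as [q Hq].
  apply Nat.odd_spec. exists (Z.to_nat q). lia.
Qed.

Theorem proposition3p1 (beta beta' : R) (hb : 0 < beta) (hb' : 0 < beta') :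
  (* (i) *)
  (forall l k : Z, (0 <= l)%Z -> (0 <= k)%Z ->
     ((l < k)%Z \/ Z.odd (l + k) = true) -> T beta beta' l k = 0) /\
  (* (ii) *)
  (forall l k : Z, (0 <= l)%Z -> (0 <= k)%Z ->
     T beta beta' l k =
       beta / beta' * sqrt ((IZR k + 1) / (IZR l + 1)) * T beta beta' (l + 1) (k + 1)) /\
  (forall l : Z, (0 <= l)%Z ->
     T beta beta' l l = Rpower (beta' / beta) (IZR l + 1 / 2)) /\
  (* (iii) *)
  (forall l k : Z, (1 <= l)%Z -> (0 <= k)%Z ->
     T beta beta' l k =
       beta' / beta * sqrt ((IZR k + 1) / IZR l) * T beta beta' (l - 1) (k + 1)
     + beta' / beta * sqrt (IZR k / IZR l) * T beta beta' (l - 1) (k - 1)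
     - sqrt ((IZR l - 1) / IZR l) * T beta beta' (l - 2) k) /\
  (* (iv) *)
  (forall l k : Z, (1 <= l)%Z -> (0 <= k)%Z -> l <> k ->
     T beta beta' l k =
       sqrt (IZR l * (IZR k + 1)) / (IZR l - IZR k) * (beta' / beta - beta / beta')
       * T beta beta' (l - 1) (k + 1)).
Proof.
  assert (Ha : 0 < beta / sqrt 2) by (apply Rdiv_lt_0_compat; auto; apply sqrt2_pos).
  assert (Hb : 0 < beta' / sqrt 2) by (apply Rdiv_lt_0_compat; auto; apply sqrt2_pos).
  split; [|split; [|split; [|split]]].
  - intros l k Hl Hk Hc.
    destruct (Z_of_nat_complete l Hl) as [n ->]. destruct (Z_of_nat_complete k Hk) as [m ->].
    rewrite T_nat, Tnat_K by auto.
    destruct Hc as [Hc|Hc].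
    + rewrite K_lt by (auto; lia). ring.
    + rewrite K_odd by (auto; apply odd_conv; auto). ring.
  - intros l k Hl Hk.
    destruct (Z_of_nat_complete l Hl) as [n ->]. destruct (Z_of_nat_complete k Hk) as [m ->].
    replace (Z.of_nat n + 1)%Z with (Z.of_nat (S n)) by lia.
    replace (Z.of_nat m + 1)%Z with (Z.of_nat (S m)) by lia.
    rewrite !T_nat, <- !INR_IZR_INZ, <- !S_INR. apply T_ii; auto.
  - intros l Hl. destruct (Z_of_nat_complete l Hl) as [n ->].
    rewrite T_nat, <- INR_IZR_INZ. apply T_diag; auto.
  - intros l k Hl Hk.
    destruct (Z_of_nat_complete k Hk) as [m ->].
    assert (Hl' : (0 <= l - 1)%Z) by lia.
    destruct (Z_of_nat_complete (l - 1) Hl') as [n Hn].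
    replace l with (Z.of_nat (S n)) by lia.
    replace (Z.of_nat (S n) - 1)%Z with (Z.of_nat n) by lia.
    replace (Z.of_nat m + 1)%Z with (Z.of_nat (S m)) by lia.
    rewrite !T_nat, (T_iii beta beta' hb hb' n m).
    rewrite <- !INR_IZR_INZ, <- S_INR.
    replace (INR (S n) - 1) with (INR n) by (rewrite S_INR; ring).
    f_equal; [f_equal|].
    + destruct m as [|m].
      * simpl INR. rewrite Rdiv_0_l, sqrt_0. ring.
      * replace (Z.of_nat (S m) - 1)%Z with (Z.of_nat m) by lia. rewrite T_nat. reflexivity.
    + destruct n as [|n].
      * simpl INR. rewrite Rdiv_0_l, sqrt_0. ring.
      * replace (Z.of_nat (S (S n)) - 2)%Z with (Z.of_nat n) by lia. rewrite T_nat. reflexivity.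
  - intros l k Hl Hk Hne.
    destruct (Z_of_nat_complete k Hk) as [m ->].
    assert (Hl' : (0 <= l - 1)%Z) by lia.
    destruct (Z_of_nat_complete (l - 1) Hl') as [n Hn].
    replace l with (Z.of_nat (S n)) in * by lia.
    replace (Z.of_nat (S n) - 1)%Z with (Z.of_nat n) by lia.
    replace (Z.of_nat m + 1)%Z with (Z.of_nat (S m)) by lia.
    rewrite !T_nat. rewrite <- !INR_IZR_INZ, <- S_INR.
    apply T_iv; auto.
    intros E. apply Hne. f_equal. apply INR_eq. lra.
Qed.
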